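(* For a prime $p$ and integer $d \ge 1$, let $t = \lfloor 2d/(p-1) \rfloor$ and \[ B'(p,d) = 2 + \left\lfloor \frac{pt + (p-1)\lambda_p(t)}{d} \right\rfloor, \] where for $m = \sum_{i=0}^s c_i p^i$ with $0 \le c_i < p$ one sets $\lambda_p(m) = \sum_{i=0}^s i c_i p^i$. Then: \begin{enumerate} \item If $p \ge 5$ and $p \ge d$, then $B'(p,d) = 2$ if $p > 2d+1$; $B'(p,d) = 4$ if $p = 2d+1$ or $p = d$; and $B'(p,d) = 3$ if $d+1 < p < 2d+1$. \item If $5 \le p \le d$, then $B'(p,d) \ge 3$. \item $B'(3,1) = B'(3,2) = 5$, and $B'(3,d) \ge 6$ for $d \ge 3$. \item $B'(2,1) = 8$, $B'(2,2) = 10$, $B'(2,3) = 9$, and $B'(2,d) \ge 9$ for $d \ge 4$. \item For any prime $p$, if $(p-1) \mid 2d$, then $B'(p,d) \ge 4 + 2 v_p(d) + 4 v_2(p) + v_p(3)$, with equality when $\frac{2d}{p^{v_p(2d)}(p-1)} < p$. \end{enumerate}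
   Context: $v_p$ denotes the $p$-adic valuation (so $v_2(p) = 1$ if $p = 2$ and $0$ otherwise, and $v_p(3) = 1$ if $p=3$ and $0$ otherwise). Note $B'(p,d) = \lfloor B(p,d)/d \rfloor$ where $B(p,d) = 2d + pt + (p-1)\lambda_p(t)$ is the Brumer–Kramer conductor bound. *)

(* Defs.v *)
From mathcomp Require Import all_boot.
Set Implicit Arguments. Unset Strict Implicit. Unset Printing Implicit Defensive.

(* Base-p digit c_i of m : (m %/ p^i) %% p.  For p >= 2 all digits of index
   i > m vanish, so summing over i < m.+1 covers every digit. *)
Definition lambda_p (p m : nat) : nat :=
  \sum_(i < m.+1) i * ((m %/ p ^ i) %% p) * p ^ i.

Definition tpd (p d : nat) : nat := (2 * d) %/ (p - 1).

Definition Bprime (p d : nat) : nat :=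
  2 + (p * tpd p d + (p - 1) * lambda_p p (tpd p d)) %/ d.

(* Main.v *)
Require Import Defs.
From mathcomp Require Import all_boot.
From mathcomp Require Import zify.
From mathcomp Require Import all_algebra ring.
Set Warnings "-notation-overridden".
Set Implicit Arguments. Unset Strict Implicit.

Lemma div_eq n d q : 0 < d -> q*d <= n < q*d + d -> n %/ d = q.
Proof.
move=> d0 /andP[h1 h2].
have e := divn_eq n d. have m := ltn_pmod n d0.
set q' := n %/ d in e *. set r := n %% d in e m *.
have [|] := leqP q' q => hq.
  have [|] := leqP q q' => hq2; first by apply/eqP; rewrite eqn_leq hq hq2.
  exfalso. have : q'.+1 * d <= q * d by rewrite leq_mul2r hq2 orbT.
  nia.
exfalso. have : q.+1 * d <= q' * d by rewrite leq_mul2r hq orbT. nia.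
Qed.

Definition dig p m i := (m %/ p ^ i) %% p.
Definition L p n m := \sum_(i < n) i * dig p m i * p ^ i.
Definition D p n m := \sum_(i < n) dig p m i * p ^ i.

Lemma D_eq p n m : D p n m + p ^ n * (m %/ p ^ n) = m.
Proof.
elim: n => [|n IH]; first by rewrite /D big_ord0 expn0 divn1 mul1n.
rewrite /D big_ord_recr /= -/(D p n m) expnSr divnMA /dig.
have e := divn_eq (m %/ p ^ n) p.
set x := m %/ p ^ n in IH e *. set D0 := D p n m in IH *.
rewrite -{}IH {3}e; move: (x %/ p) (x %% p) (p ^ n) => a b c; rewrite mulnDr; nia.
Qed.

Lemma L_ext p n n' m : 1 < p -> m < p ^ n -> n <= n' -> L p n' m = L p n m.
Proof.
move=> p1 mn nn'.
rewrite /L -!(big_mkord xpredT (fun i => i * dig p m i * p ^ i)).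
rewrite (@big_cat_nat _ _ _ n 0 n' _ _ (leq0n n) nn') /=.
rewrite -[RHS]addn0; congr (_ + _); rewrite big_nat_cond big1 // => i /andP[/andP[Hi _] _].
have : m < p ^ i by apply: leq_trans mn _; rewrite leq_pexp2l // ltnW.
by move=> h; rewrite /dig divn_small // mod0n muln0 mul0n.
Qed.

Lemma lam_L p m n : 1 < p -> m < p ^ n -> lambda_p p m = L p n m.
Proof.
move=> p1 mn.
have h : m < p ^ m.+1 by apply: leq_trans (ltn_expl m p1) _; rewrite leq_pexp2l // ltnW.
rewrite /lambda_p -/(L p m.+1 m).
case: (leqP n m.+1) => hn; first by rewrite (L_ext p1 mn hn).
by rewrite (L_ext p1 h (ltnW hn)).
Qed.

Lemma lam0 p : lambda_p p 0 = 0.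
Proof. by rewrite /lambda_p big_ord1. Qed.

Lemma lam_rec p m : 1 < p -> lambda_p p m = p * (lambda_p p (m %/ p) + m %/ p).
Proof.
move=> p1.
have hq : m %/ p <= m by apply: leq_div.
have h1 : m < p ^ m.+1 by apply: leq_trans (ltn_expl m p1) _; rewrite leq_pexp2l // ltnW.
have h2 : m < p ^ m.+2 by apply: leq_trans h1 _; rewrite leq_pexp2l // ltnW.
have h3 : m %/ p < p ^ m.+1 by apply: leq_ltn_trans h1.
rewrite (lam_L p1 h2) (lam_L p1 h3).
have hD : D p m.+1 (m %/ p) = m %/ p.
  by have := D_eq p m.+1 (m %/ p); rewrite (divn_small h3) muln0 addn0.
rewrite -{2}hD /L /D big_ord_recl /= mul0n add0n -big_split big_distrr /=.
apply: eq_bigr => i _. rewrite /dig /bump /= add1n expnS divnMA.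
set x := (_ %% p). nia.
Qed.

Lemma lam_small p m : 1 < p -> m < p -> lambda_p p m = 0.
Proof. by move=> p1 mp; rewrite lam_rec // divn_small // lam0 muln0. Qed.

Lemma lam_pow p k c : 1 < p -> k * (c * p ^ k) <= lambda_p p (c * p ^ k) /\
   (c < p -> lambda_p p (c * p ^ k) = k * (c * p ^ k)).
Proof.
move=> p1; elim: k => [|k [IH1 IH2]].
  by rewrite expn0 muln1 mul0n; split=> // cp; rewrite lam_small.
have e : c * p ^ k.+1 %/ p = c * p ^ k.
  by rewrite expnS mulnCA mulKn // ltnW.
rewrite (lam_rec _ p1) e expnS.
split; first nia.
move=> cp; rewrite IH2 //; nia.
Qed.

Unset Implicit Arguments.


Lemma part1 : (forall p d : nat, prime p -> 1 <= d -> 5 <= p -> d <= p ->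
     (2 * d + 1 < p -> Bprime p d = 2) /\
     ((p = 2 * d + 1 \/ p = d) -> Bprime p d = 4) /\
     (d + 1 < p < 2 * d + 1 -> Bprime p d = 3)).
Proof.
move=> p d pp d1 p5 dp.
have p1 : 1 < p by lia.
split; [|split].
- move=> h. have t0 : tpd p d = 0 by rewrite /tpd divn_small //; lia.
  by rewrite /Bprime t0 lam0 !muln0 div0n.
- case=> hp.
  + have t1 : tpd p d = 1 by rewrite /tpd; apply: div_eq; lia.
    rewrite /Bprime t1 lam_small // muln0 addn0 muln1.
    rewrite (@div_eq _ _ 2) //; lia.
  + have t1 : tpd p d = 2 by rewrite /tpd; apply: div_eq; lia.
    have l2 : lambda_p p 2 = 0 by apply: lam_small => //; lia.
    rewrite /Bprime t1 l2 muln0 addn0.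
    rewrite (@div_eq _ _ 2) //; lia.
- move=> /andP[h h'].
  have t1 : tpd p d = 1 by rewrite /tpd; apply: div_eq; lia.
  rewrite /Bprime t1 lam_small // muln0 addn0 muln1.
  have hne : p != 2 * d.
    apply/negP => /eqP hp2. have : 2 %| p by rewrite hp2 dvdn_mulr.
    by move/(prime_nt_dvdP pp (isT : 2 != 1)) => h2; rewrite -h2 in p5.
  rewrite (@div_eq _ _ 1) //; apply/andP; split; lia.
Qed.

Lemma part2 : (forall p d : nat, prime p -> 1 <= d -> 5 <= p <= d -> 3 <= Bprime p d).
Proof.
move=> p d pp d1 /andP[p5 pd].
rewrite /Bprime /tpd.
have e := divn_eq (2*d) (p-1).
have m : (2*d) %% (p-1) < p - 1 by apply: ltn_pmod; lia.
set t := (2*d) %/ (p-1) in e *.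
set l := lambda_p p t.
have : 1 <= (p * t + (p - 1) * l) %/ d.
  rewrite leq_divRL //.
  nia.
lia.
Qed.

Lemma part3 : (Bprime 3 1 = 5 /\ Bprime 3 2 = 5 /\
   forall d : nat, 3 <= d -> 6 <= Bprime 3 d).
Proof.
split; first by rewrite /Bprime /tpd /= lam_small.
split; first by rewrite /Bprime /tpd /= lam_small.
move=> d d3.
have et : tpd 3 d = d by rewrite /tpd (_ : 3 - 1 = 2) // mulKn.
rewrite /Bprime et (lam_rec _ (isT : 1 < 3)).
have e := divn_eq d 3. have m := ltn_pmod d (isT : 0 < 3).
set q := d %/ 3 in e *. set l := lambda_p 3 q.
have : 4 <= (3 * d + (3 - 1) * (3 * (l + q))) %/ d.
  rewrite leq_divRL; last lia. rewrite (_ : 3 - 1 = 2) //. nia.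
lia.
Qed.

Lemma part4 : (Bprime 2 1 = 8 /\ Bprime 2 2 = 10 /\ Bprime 2 3 = 9 /\
   forall d : nat, 4 <= d -> 9 <= Bprime 2 d).
Proof.
split; first by rewrite /Bprime /tpd /= [lambda_p 2 2]lam_rec //= lam_small.
split; first by rewrite /Bprime /tpd /= [lambda_p 2 4]lam_rec //= [lambda_p 2 2]lam_rec //= lam_small.
split; first by rewrite /Bprime /tpd /= [lambda_p 2 6]lam_rec //= [lambda_p 2 3]lam_rec //= lam_small.
move=> d d4.
have et : tpd 2 d = 2 * d by rewrite /tpd (_ : 2 - 1 = 1) // divn1.
rewrite /Bprime et (lam_rec _ (isT : 1 < 2)) mulKn // (lam_rec _ (isT : 1 < 2)).
have e := divn_eq d 2. have m := ltn_pmod d (isT : 0 < 2).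
set q := d %/ 2 in e *. set l := lambda_p 2 q.
have : 7 <= (2 * (2 * d) + (2 - 1) * (2 * (2 * (l + q) + d))) %/ d.
  rewrite leq_divRL; last lia. rewrite (_ : 2 - 1 = 1) //. nia.
lia.
Qed.

Lemma part5 : (forall p d : nat, prime p -> 1 <= d -> (p - 1) %| 2 * d ->
     4 + 2 * logn p d + 4 * logn 2 p + logn p 3 <= Bprime p d /\
     ((2 * d) %/ (p ^ logn p (2 * d) * (p - 1)) < p ->
        Bprime p d = 4 + 2 * logn p d + 4 * logn 2 p + logn p 3)).
Proof.
move=> p d pp d1 hdv.
have p1 := prime_gt1 pp.
have et : tpd p d * (p - 1) = 2 * d by rewrite /tpd divnK.
set t := tpd p d in et *.
have t0 : 0 < t by nia.
set k := logn p t.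
set c := t %/ p ^ k.
have ec : t = c * p ^ k by rewrite /c divnK // pfactor_dvdnn.
have [lb leq] := lam_pow k c p1. rewrite -ec in lb leq.
have lk2d : logn p (2 * d) = k.
  rewrite -et lognM //; last lia.
  by rewrite (@ltn_log0 p (p - 1)) ?addn0 //; lia.
have hc : (2 * d) %/ (p ^ logn p (2 * d) * (p - 1)) = c.
  rewrite lk2d -et {1}ec -mulnA mulnK // muln_gt0 expn_gt0; apply/andP; split; lia.
have hd : logn p d + (p == 2) = k.
  by rewrite -lk2d lognM // (logn_prime p (isT : prime 2)) addnC.
rewrite (logn_prime 2 pp) (logn_prime p (isT : prime 3)) hc /Bprime -/t.
set l := lambda_p p t in lb leq *.
set B := p * t + (p - 1) * l.
suff [F [hF1 hF2 hF3]] : exists F, [/\ 2 + F = 4 + 2 * logn p d + 4 * (2 == p) + (p == 3),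
     F * d <= B & (c < p -> B < F * d + d)].
  split; first by rewrite -hF1 leq_add2l leq_divRL.
  by move=> cp; rewrite -hF1 (div_eq (q := F)) //; apply/andP; split => //; apply: hF3.
have h1 : (p - 1) * (k * t) <= (p - 1) * l by rewrite leq_mul2l lb orbT.
case: (eqVneq p 2) => [p2|n2].
  subst p. exists (4 + 2 * k). rewrite /= in hd et *. split.
  - lia.
  - rewrite /B. nia.
  - move=> cp; rewrite /B leq //. nia.
case: (eqVneq p 3) => [p3|n3].
  subst p. exists (3 + 2 * k). rewrite /= in hd et *. rewrite addn0 in hd. split.
  - lia.
  - rewrite /B. nia.
  - move=> cp; rewrite /B leq //. nia.
have p4 : 4 <= p by lia.
exists (2 + 2 * k). rewrite (negbTE n2) addn0 in hd. rewrite hd /=.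
have id1 : 2 * ((2 + 2 * k) * d) = 2 * (t * (p - 1)) + 2 * ((p - 1) * (k * t)).
  rewrite mulnCA -et. move: (p-1) => q. ring.
have hA : t * (p - 1) <= p * t by rewrite mulnC leq_mul2r leq_subr orbT.
have hB : 2 * (p * t) < 3 * (t * (p - 1)).
  have h23 : 2 * p < 3 * (p - 1) by lia.
  by rewrite [t * (p - 1)]mulnC !mulnA ltn_pmul2r.
have id2 : 2 * ((2 + 2 * k) * d + d) = 3 * (t * (p - 1)) + 2 * ((p - 1) * (k * t)).
  rewrite mulnDr id1 et; lia.
have h3 : c < p -> (p - 1) * l = (p - 1) * (k * t) by move=> cp; rewrite leq.
move: id1 id2 hA hB h1 h3. rewrite /B.
move: ((2 + 2 * k) * d) (t * (p - 1)) ((p - 1) * (k * t)) (p * t) ((p - 1) * l) => X A u P Lq.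
move=> id1 id2 hA hB h1 h3. split.
- lia.
- lia.
- move=> cp. have := h3 cp. lia.
Qed.



Theorem lemma3p2 :
  (* (1) *)
  (forall p d : nat, prime p -> 1 <= d -> 5 <= p -> d <= p ->
     (2 * d + 1 < p -> Bprime p d = 2) /\
     ((p = 2 * d + 1 \/ p = d) -> Bprime p d = 4) /\
     (d + 1 < p < 2 * d + 1 -> Bprime p d = 3)) /\
  (* (2) *)
  (forall p d : nat, prime p -> 1 <= d -> 5 <= p <= d -> 3 <= Bprime p d) /\
  (* (3) *)
  (Bprime 3 1 = 5 /\ Bprime 3 2 = 5 /\
   forall d : nat, 3 <= d -> 6 <= Bprime 3 d) /\
  (* (4) *)
  (Bprime 2 1 = 8 /\ Bprime 2 2 = 10 /\ Bprime 2 3 = 9 /\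
   forall d : nat, 4 <= d -> 9 <= Bprime 2 d) /\
  (* (5) *)
  (forall p d : nat, prime p -> 1 <= d -> (p - 1) %| 2 * d ->
     4 + 2 * logn p d + 4 * logn 2 p + logn p 3 <= Bprime p d /\
     ((2 * d) %/ (p ^ logn p (2 * d) * (p - 1)) < p ->
        Bprime p d = 4 + 2 * logn p d + 4 * logn 2 p + logn p 3)).
Proof.
split; first exact: part1.
split; first exact: part2.
split; first exact: part3.
split; first exact: part4.
exact: part5.
Qed.
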